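(* Let $(X,\cdot)$ be a finite Rump right quasigroup. Then for every $x\in X$ there is a unique $y\in X$ such that $x(y/x) = y$.
   Context: A right quasigroup is a magma in which every right translation $y\mapsto yx$ is a bijection; $y/x$ denotes the unique $w$ with $wx = y$. A Rump right quasigroup is a right quasigroup satisfying $(zx)(yx)=(zy)(xy)$ for all $x,y,z$. *)

(* Defs.v *)
From mathcomp Require Import all_boot.
Set Implicit Arguments. Unset Strict Implicit. Unset Printing Implicit Defensive.

Definition right_quasigroup (T : Type) (op : T -> T -> T) : Prop :=
  forall x : T, bijective (fun y => op y x).

Definition rump (T : Type) (op : T -> T -> T) : Prop :=
  forall x y z : T, op (op z x) (op y x) = op (op z y) (op x y).

Definition rump_right_quasigroup (T : Type) (op : T -> T -> T) : Prop :=
  right_quasigroup op /\ rump op.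

(* Right division y / x on a finite magma: the (unique, in a right quasigroup)
   w with op w x = y; defaults to y if no such w exists. *)
Definition rdiv (T : finType) (op : T -> T -> T) (y x : T) : T :=
  odflt y [pick w | op w x == y].

Lemma rdivK (T : finType) (op : T -> T -> T) :
  right_quasigroup op -> forall y x, op (rdiv op y x) x = y.
Proof.
move=> rq y x; rewrite /rdiv; case: pickP => [w /eqP //|H].
case: (rq x) => g _ gK; have := H (g y); by rewrite /= gK eqxx.
Qed.

(* Main.v *)
Require Import Defs.
From mathcomp Require Import all_boot.

Lemma sq_inj (T : finType) (op : T -> T -> T) :
  rump_right_quasigroup op -> injective (fun y => op y y).
Proof.
case=> rq ru.
set q := fun y => op y y.
have Rinj : forall x, injective (fun y => op y x).
  by move=> x; apply: bij_inj; apply: rq.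
set Q := [set q y | y in T].
have closed : forall w, [set op u w | u in Q] \subset Q.
  move=> w; apply/subsetP=> v /imsetP [u /imsetP [y _ ->] ->].
  case: (rq y) => g gK Kg.
  have Kgw : op (g w) y = w by apply: (Kg w).
  have e1 : q (op y (g w)) = op (q y) w by rewrite /q (ru (g w) y y) Kgw.
  by apply/imsetP; exists (op y (g w)).
have eqQ : forall w, [set op u w | u in Q] = Q.
  move=> w; apply/eqP; rewrite eqEcard closed /=.
  by rewrite card_imset //; apply: Rinj.
have full : forall t, t \in Q.
  move=> t.
  have : q t \in Q by apply/imsetP; exists t.
  rewrite -{1}(eqQ t) => /imsetP [u uQ e].
  by move/Rinj: e => ->.
have QT : Q = [set: T] by apply/setP=> t; rewrite full in_setT.
have cQ : #|Q| = #|[set: T]| by rewrite QT.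
move=> a b e.
have H : #|[set q y | y in T]| == #|T| by rewrite -/Q cQ cardsT.
by move/imset_injP: H; apply.
Qed.

Theorem mainTheorem5 (T : finType) (op : T -> T -> T) :
  rump_right_quasigroup op ->
  forall x : T, exists! y : T, op x (rdiv op y x) = y.
Proof.
move=> H x.
have sq := @sq_inj T op H.
case: H => rq ru.
have Rinj : forall x, injective (fun y => op y x).
  by move=> z; apply: bij_inj; apply: rq.
have dK := rdivK rq.
exists (op x x); split.
  have e : rdiv op (op x x) x = x by apply: (Rinj x); rewrite /= dK.
  by rewrite e.
move=> y e.
set w := rdiv op y x in e.
have ew : op w x = y by rewrite /w dK.
have zz : forall z, op z x = op z w.
  move=> z; apply: (Rinj (op x w)).
  by rewrite /= -ru e -ew.
have h1 : op x x = op w w by rewrite zz e -ew -zz.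
have := sq _ _ h1 => xw.
by rewrite -ew -xw.
Qed.
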